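(* Let $[X,A]$ be a Banach space with an $i$-operator. Then $A\oplus(-A)$, $(x_1,x_2)\mapsto(Ax_1,-Ax_2)$, is an $i$-operator on $X\oplus X$ (normed e.g. by $\|(x_1,x_2)\|=\|x_1\|+\|x_2\|$), and in the category of Banach spaces with an $i$-operator $[X\oplus X,A\oplus -A]\simeq[X\oplus X,N_X]$.
   Context: A Banach space with an $i$-operator is a pair $[X,A]$ with $X$ a real Banach space and $A:X\to X$ bounded linear with $A^2=-I_X$ and $\|\alpha x+\beta Ax\|=\|x\|$ for all real $\alpha,\beta$ with $\alpha^2+\beta^2=1$. Two such spaces $[X,A]$, $[Y,B]$ are isomorphic ($\simeq$) if there is a bounded linear bijection $T:X\to Y$ with $TA=BT$. $N_X(x_1,x_2)=(-x_2,x_1)$, and $[X\oplus X,N_X]$ is the complexification of $X$, with norm $\|(x_1,x_2)\|=\left(\frac1{2\pi}\int_{-\pi}^{\pi}\|x_1\cos\phi+x_2\sin\phi\|^2d\phi\right)^{1/2}$. *)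

(* Defs.v *)
From HB Require Import structures.
From mathcomp Require Import all_boot all_order all_algebra.
From mathcomp Require Import all_classical all_reals all_analysis.
Set Implicit Arguments. Unset Strict Implicit. Unset Printing Implicit Defensive.
Import Order.TTheory GRing.Theory Num.Theory.
Import numFieldNormedType.Exports.
Local Open Scope ring_scope.
Local Open Scope classical_set_scope.

Section Defs.
Variable R : realType.

Definition is_linear (V W : lmodType R) (f : V -> W) : Prop :=
  forall (a : R) (u v : V), f (a *: u + v) = a *: f u + f v.

Definition is_bounded (V W : Type) (nV : V -> R) (nW : W -> R) (f : V -> W) :=
  exists M : R, forall x, nW (f x) <= M * nV x.

Definition i_operator (V : lmodType R) (nrm : V -> R) (A : V -> V) : Prop :=
  [/\ is_linear A, is_bounded nrm nrm A, (forall x, A (A x) = - x)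
    & forall (a b : R) (x : V), a ^+ 2 + b ^+ 2 = 1 ->
        nrm (a *: x + b *: A x) = nrm x].

Definition sum_norm (X : normedModType R) (y : X * X) : R := `|y.1| + `|y.2|.

Definition cplx_norm (X : normedModType R) (y : X * X) : R :=
  Num.sqrt ((2 * pi)^-1 *
    Rintegral (@lebesgue_measure R) `[- pi, pi]%classic
      (fun phi : R => `|cos phi *: y.1 + sin phi *: y.2| ^+ 2)).

Definition dsum_opp (X : lmodType R) (A : X -> X) (y : X * X) : X * X :=
  (A y.1, - A y.2).

Definition N_op (X : lmodType R) (y : X * X) : X * X := (- y.2, y.1).

End Defs.

(* Main.v *)
Require Import Defs.
From HB Require Import structures.
From mathcomp Require Import all_boot all_order all_algebra.
From mathcomp Require Import all_classical all_reals all_analysis.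
From mathcomp Require Import lra.
Import Order.TTheory GRing.Theory Num.Theory.
Import numFieldNormedType.Exports.
Local Open Scope ring_scope.

Section Aux.
Variable R : realType.
Variable X : normedModType R.
Variable A : X -> X.
Hypothesis linA : is_linear A.

Lemma A0 : A 0 = 0.
Proof.
have := linA 1 0 0; rewrite !scale1r addr0 => h.
by apply: (@addrI _ (A 0)); rewrite addr0 -h.
Qed.

Lemma AD u v : A (u + v) = A u + A v.
Proof. by have := linA 1 u v; rewrite !scale1r. Qed.

Lemma AZ a u : A (a *: u) = a *: A u.
Proof. by have := linA a u 0; rewrite !addr0 A0 addr0. Qed.

Lemma AN u : A (- u) = - A u.
Proof. by rewrite -scaleN1r AZ scaleN1r. Qed.

Lemma AB u v : A (u - v) = A u - A v.
Proof. by rewrite AD AN. Qed.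

End Aux.

Lemma cg (R : realType) (X : normedModType R) (u v : X) :
  continuous (fun phi : R => `|cos phi *: u + sin phi *: v| ^+ 2).
Proof.
move=> x.
apply: (@continuous_comp _ _ _ (fun phi : R => `|cos phi *: u + sin phi *: v|) (fun r : R => r ^+ 2)); last exact: exprn_continuous.
apply: (@continuous_comp _ _ _ (fun phi : R => cos phi *: u + sin phi *: v) (@Num.Def.normr R X)); last exact: norm_continuous.
apply: cvgD; apply: cvgZl.
exact: continuous_cos.
exact: continuous_sin.
Qed.

Theorem proposition3 (R : realType) (X : completeNormedModType R) (A : X -> X) :
  i_operator (fun x : X => `|x|) A ->
  i_operator (@sum_norm R X) (@dsum_opp R X A) /\
  exists T : X * X -> X * X,
    [/\ is_linear T, is_bounded (@sum_norm R X) (@cplx_norm R X) T,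
        bijective T
      & forall y, T (dsum_opp A y) = N_op (T y) ].
Proof.
case=> linA [M hM] AA nA.
split.
  split.
  - move=> a [u1 u2] [v1 v2]; rewrite /dsum_opp /=.
    by rewrite !linA opprD -scalerN.
  - exists M => -[y1 y2]; rewrite /sum_norm /dsum_opp /= normrN mulrDr.
    exact: lerD.
  - by move=> [y1 y2]; rewrite /dsum_opp /= (@AN _ _ _ linA) !AA opprK.
  - move=> a b [y1 y2] hab; rewrite /sum_norm /dsum_opp /=.
    rewrite nA // scalerN -scaleNr nA //.
    by rewrite sqrrN.
pose T := fun y : X * X => (y.1 + y.2, - A y.1 + A y.2).
have AN' := @AN _ _ _ linA.
have half : forall x : X, 2^-1 *: (x + x) = x.
  move=> x; have h : x + x = (2 : R) *: x by rewrite scalerDl scale1r.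
  by rewrite h scalerA mulVf ?scale1r // pnatr_eq0.
exists T; split.
- move=> a [u1 u2] [v1 v2]; rewrite /T /= !linA.
  have -> : a *: ((u1 + u2, - A u1 + A u2) : X * X) + (v1 + v2, - A v1 + A v2) = (a *: (u1 + u2) + (v1 + v2), a *: (- A u1 + A u2) + (- A v1 + A v2)) by [].
  congr (_, _); first by rewrite scalerDr addrACA.
  by rewrite opprD scalerDr !scalerN addrACA.
- exists (1 + M) => -[y1 y2]; rewrite /cplx_norm /sum_norm /T /=.
  set u := y1 + y2; set v := - A y1 + A y2.
  set C := `|u| + `|v|.
  have C0 : 0 <= C by rewrite addr_ge0.
  have hC : C <= (1 + M) * (`|y1| + `|y2|).
    have h1 : `|u| <= `|y1| + `|y2| by apply: ler_normD.
    have h2 : `|v| <= `|A y1| + `|A y2| by rewrite /v (le_trans (ler_normD _ _)) // normrN.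
    have h3 := hM y1; have h4 := hM y2.
    rewrite /C mulrDl mul1r mulrDr; lra.
  have hpt : forall phi : R, `|cos phi *: u + sin phi *: v| ^+ 2 <= C ^+ 2.
    move=> phi.
    have hn : `|cos phi *: u + sin phi *: v| <= C.
      rewrite (le_trans (ler_normD _ _)) // !normrZ /C.
      apply: lerD.
        by rewrite -[leRHS]mul1r ler_wpM2r // cos_max.
      by rewrite -[leRHS]mul1r ler_wpM2r // sin_max.
    by rewrite !expr2 ler_pM.
  rewrite /Rintegral; set I := integral _ _ _.
  have I0 : (0 <= I)%E by apply: integral_ge0 => x _; rewrite lee_fin sqr_ge0.
  have pi0 : 0 < pi :> R by apply: pi_gt0.
  have hI : (I <= (C ^+ 2 * (2 * pi))%:E)%E.
    apply: (le_trans (@ge0_le_integral _ _ _ lebesgue_measure _ _ _ (cst (C ^+ 2)%:E) _ _ _ _)).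
    - by [].
    - by move=> x _; rewrite lee_fin sqr_ge0.
    - apply/measurable_realfun.measurable_EFinP; apply: (measurable_funS _ (subsetT _)) => //.
      by have := measurable_realfun.continuous_measurable_fun (cg _ _ u v).
    - exact: measurable_cst.
    - by move=> x _; rewrite lee_fin hpt.
    rewrite integral_cst //. have hm := @lebesgue_measure_itv R `[- pi, pi]%R.
    change (((C ^+ 2)%:E * (lebesgue_measure ([set` `[- pi, pi]%R] : set R)) <= (C ^+ 2 * (2 * pi))%:E)%E).
    rewrite hm /=.
    have hp : (- pi < pi :> R) by lra.
    case: ifPn => [_|/negP[]]; last exact: hp.
    rewrite -EFinD -EFinM lee_fin opprK.
    apply: ler_wpM2l; first exact: sqr_ge0.
    lra.
  have Ifin : I \is a fin_num by rewrite ge0_fin_numE // (le_lt_trans hI) // ltry.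
  have hfI : fine I <= C ^+ 2 * (2 * pi).
    by rewrite -lee_fin fineK.
  apply: (le_trans _ hC).
  rewrite -[leRHS]ger0_norm // -sqrtr_sqr ler_sqrt; last by rewrite sqr_ge0.
  rewrite -ler_pdivlMl ?invr_gt0 ?mulr_gt0 // invrK mulrC; lra.
- exists (fun y : X * X => (2^-1 *: (y.1 + A y.2), 2^-1 *: (y.1 - A y.2))).
  + move=> [y1 y2]; rewrite /T /=.
    rewrite (@AD _ _ _ linA) AN' !AA opprK.
    have e1 : y1 + y2 + (y1 - y2) = y1 + y1 by rewrite addrACA subrr addr0.
    have e2 : y1 + y2 - (y1 - y2) = y2 + y2.
      by rewrite opprB addrA -[y1 + y2 + y2]addrA addrC addrA addNr add0r.
    congr (_, _); first by rewrite -[RHS]half -e1.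
    by rewrite -[RHS]half -e2.
  + move=> [y1 y2]; rewrite /T /=.
    rewrite -scalerDr addrACA subrr addr0 half.
    rewrite !(@AZ _ _ _ linA) !(@AD _ _ _ linA) AN' AA -scalerN -scalerDr.
    congr (_, _); rewrite -[RHS]half; congr (_ *: _).
    by rewrite opprB opprK -addrA [X in _ + X]addrA addNr add0r.
- move=> [y1 y2]; rewrite /T /dsum_opp /N_op /=.
  by rewrite AN' !AA !opprK opprD opprK.
Qed.
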